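(* Let $\lambda \in [0,1)$ and $\delta \ge 0$. Let $\{X(a)\}_{a\in\{0,1\}^n}$ and $\{Z(a)\}_{a\in\{0,1\}^n}$ be families of efficient binary observables on a finite-dimensional Hilbert space $\mathcal{H}$ such that $W(a)W(b) = W(a+b)$ for all $W \in \{X,Z\}$ and all $a,b\in\{0,1\}^n$. Let $\rho$ be a normalised state on $\mathcal{H}$ with $\rho \overset{c}{\approx}_\delta \mathbb{E}_{a\in\{0,1\}^n} W(a)\rho W(a)$ for both $W \in \{X,Z\}$, and let $S \subseteq \{0,1\}^n$ be $\lambda$-biased. Then \[ \mathbb{E}_{a,b\in\{0,1\}^n} \|Z(a)X(b) - (-1)^{a\cdot b}X(b)Z(a)\|_\rho^2 \le \frac{1}{(1-\lambda)^2}\,\mathbb{E}_{a,b\in S}\|Z(a)X(b) - (-1)^{a\cdot b}X(b)Z(a)\|_\rho^2 + \frac{2\delta(2-\lambda)}{(1-\lambda)^2}. \]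
   Context: A binary observable is a Hermitian unitary. The state-dependent norm is $\|A\|_\rho^2 := \mathrm{Tr}[A^\dagger A\rho]$. Expectations over sets are uniform. A set $S \subseteq \{0,1\}^n$ is $\lambda$-biased if for every nonzero $b \in \{0,1\}^n$, $|\mathbb{E}_{a \in S}(-1)^{a\cdot b}| \le \lambda$. For states $\rho,\rho'$, the relation $\rho \overset{c}{\approx}_\delta \rho'$ is taken (as in the paper's usage) to mean: for all efficiently implementable unitaries $U, U'$ (on the relevant Hilbert space, including after tensoring with an auxiliary maximally mixed register and efficient Pauli operators on it), $\big|\|U - U'\|_\rho^2 - \|U-U'\|_{\rho'}^2\big| \le \delta$; ''efficient'' refers to implementability by polynomial-size quantum circuits. *)

(* Defs.v *)
(* Hilbert space H = C^d for an arbitrary numClosedFieldType C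
   (e.g. algC or complex numbers over a real closed field). *)
From HB Require Import structures.
From mathcomp Require Import all_boot all_order all_algebra.
From mathcomp Require Import mxtens.
Set Implicit Arguments. Unset Strict Implicit. Unset Printing Implicit Defensive.
Import Order.TTheory GRing.Theory Num.Theory.
Local Open Scope ring_scope.

Section Defs.
Variable C : numClosedFieldType.

Definition adj m n (A : 'M[C]_(m, n)) : 'M[C]_(n, m) := map_mx Num.conj A^T.

Definition unitary d (U : 'M[C]_d) : Prop :=
  adj U *m U = 1%:M /\ U *m adj U = 1%:M.

Definition hermitian d (A : 'M[C]_d) : Prop := adj A = A.

Definition binary_observable d (A : 'M[C]_d) : Prop := hermitian A /\ unitary A.

Definition psd d (A : 'M[C]_d) : Prop :=
  hermitian A /\ forall v : 'cV[C]_d, 0 <= (adj v *m A *m v) 0 0.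
Definition state d (rho : 'M[C]_d) : Prop := psd rho /\ \tr rho = 1.

Definition nrm2 d (rho A : 'M[C]_d) : C := \tr (adj A *m A *m rho).

Definition Exp (T : finType) (S : {set T}) (f : T -> C) : C :=
  (#|S|%:R)^-1 * \sum_(a in S) f a.

Definition sgn n (a b : 'rV['F_2]_n) : C :=
  (-1) ^+ (nat_of_ord ((a *m b^T) 0 0)).

Definition lambda_biased n (lam : C) (S : {set 'rV['F_2]_n}) : Prop :=
  forall b : 'rV['F_2]_n, b != 0 -> `| Exp S (fun a => sgn a b) | <= lam.

(* Abstract model of "efficiently implementable unitaries" on C^d:
   a class of unitaries containing the identity and -1 and closed under
   composition. *)
Record eff_class d (Eff : 'M[C]_d -> Prop) : Prop := {
  eff_unitary : forall U, Eff U -> unitary U;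
  eff_id : Eff 1%:M;
  eff_neg : Eff (- 1%:M);
  eff_mul : forall U V, Eff U -> Eff V -> Eff (U *m V)
}.

(* single-qubit Pauli operators with phases i^k, acting on an auxiliary qubit *)
Definition pauli0 (j : 'I_4) : 'M[C]_2 :=
  \matrix_(r < 2, c < 2)
    (match nat_of_ord j with
     | 0%N => if r == c then 1 else 0
     | 1%N => if r == c then 0 else 1
     | 2%N => if r == c then 0 else (if (nat_of_ord r == 0%N) then - 'i else 'i)
     | _ => if r == c then (if (nat_of_ord r == 0%N) then 1 else -1) else 0
     end).
Definition pauli (k j : 'I_4) : 'M[C]_2 := ('i ^+ k) *: pauli0 j.

Definition mixed2 : 'M[C]_2 := (2%:R)^-1 *: 1%:M.

(* rho ~c_delta rho' relative to the efficiency class Eff, including the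
   version with an auxiliary maximally mixed qubit and Pauli operators on it *)
Definition capprox d (Eff : 'M[C]_d -> Prop) (delta : C) (rho rho' : 'M[C]_d) : Prop :=
  (forall U U', Eff U -> Eff U' ->
     `| nrm2 rho (U - U') - nrm2 rho' (U - U') | <= delta) /\
  (forall U U' (k j k' j' : 'I_4), Eff U -> Eff U' ->
     `| nrm2 (rho *t mixed2) (U *t pauli k j - U' *t pauli k' j')
      - nrm2 (rho' *t mixed2) (U *t pauli k j - U' *t pauli k' j') | <= delta).

Definition twirl n d (W : 'rV['F_2]_n -> 'M[C]_d) (rho : 'M[C]_d) : 'M[C]_d :=
  (#|[set: 'rV['F_2]_n]|%:R)^-1 *: \sum_(a : 'rV['F_2]_n) (W a *m rho *m W a).

End Defs.
Arguments sgn {C n}.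
Arguments pauli0 {C}.
Arguments pauli {C}.
Arguments mixed2 {C}.

(* Main.v *)
Require Import Defs.
From HB Require Import structures.
From mathcomp Require Import all_boot all_order all_algebra.
From mathcomp Require Import mxtens ring.
Set Implicit Arguments. Unset Strict Implicit. Unset Printing Implicit Defensive.
Import Order.TTheory GRing.Theory Num.Theory.
Local Open Scope ring_scope.



Section Adj.
Variable C : numClosedFieldType.

Lemma hadjK m n (A : 'M[C]_(m, n)) : adj (adj A) = A.
Proof. by apply/matrixP => i j; rewrite !mxE conjCK. Qed.

Lemma hadjM m n p (A : 'M[C]_(m, n)) (B : 'M[C]_(n, p)) :
  adj (A *m B) = adj B *m adj A.
Proof. by rewrite /adj trmx_mul map_mxM. Qed.

Lemma hadjD m n (A B : 'M[C]_(m, n)) : adj (A + B) = adj A + adj B.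
Proof. by apply/matrixP => i j; rewrite !mxE rmorphD. Qed.

Lemma hadjN m n (A : 'M[C]_(m, n)) : adj (- A) = - adj A.
Proof. by apply/matrixP => i j; rewrite !mxE rmorphN. Qed.

Lemma hadjB m n (A B : 'M[C]_(m, n)) : adj (A - B) = adj A - adj B.
Proof. by rewrite hadjD hadjN. Qed.

Lemma hadjZ m n (c : C) (A : 'M[C]_(m, n)) : adj (c *: A) = c^* *: adj A.
Proof. by apply/matrixP => i j; rewrite !mxE rmorphM. Qed.

Lemma hadj_sum m n (I : finType) (F : I -> 'M[C]_(m, n)) :
  adj (\sum_i F i) = \sum_i adj (F i).
Proof.
apply/matrixP => i j; rewrite !mxE !summxE rmorph_sum; apply: eq_bigr => k _.
by rewrite !mxE.
Qed.

Lemma hadj1 n : adj (1%:M : 'M[C]_n) = 1%:M.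
Proof. by apply/matrixP => i j; rewrite !mxE rmorph_nat eq_sym. Qed.

Lemma psd_tr n (rho M : 'M[C]_n) :
  (forall v : 'cV[C]_n, 0 <= (adj v *m rho *m v) 0 0) ->
  0 <= \tr (adj M *m M *m rho).
Proof.
move=> H; rewrite -mulmxA mxtrace_mulC /mxtrace.
apply: sumr_ge0 => i _.
have := H (adj (row i M)); rewrite hadjK => Hi.
suff -> : (M *m rho *m adj M) i i = (row i M *m rho *m adj (row i M)) 0 0 by [].
rewrite -row_mul !mxE; apply: eq_bigr => k _; rewrite !mxE; congr (_ * _).
Qed.

End Adj.



Section Sgn.
Variable C : numClosedFieldType.
Variable n : nat.
Local Notation G := 'rV['F_2]_n.

Lemma F2_sgnD (x y : 'F_2) :
  (-1) ^+ (nat_of_ord (x + y)) = (-1) ^+ (nat_of_ord x) * (-1) ^+ (nat_of_ord y) :> C.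
Proof.
case: x => [[|[|//]] ?]; case: y => [[|[|//]] ?] //=; rewrite ?expr0 ?mul1r ?mulr1 //.
by rewrite mulN1r opprK.
Qed.

Lemma F2_neq0 (x : 'F_2) : x != 0 -> nat_of_ord x = 1%N.
Proof. by case: x => [[|[|//]] ?]. Qed.

Lemma F2_addxx (x : 'F_2) : x + x = 0.
Proof. by case: x => [[|[|//]] ?]; apply/eqP. Qed.

Lemma G_addxx (x : G) : x + x = 0.
Proof. by apply/matrixP => i j; rewrite !mxE F2_addxx. Qed.

Lemma sgn_sym (a b : G) : sgn a b = sgn b a :> C.
Proof.
rewrite /sgn; congr (_ ^+ nat_of_ord _).
have -> : (b *m a^T) = (a *m b^T)^T by rewrite trmx_mul trmxK.
by rewrite [RHS]mxE.
Qed.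

Lemma sgnDl (a a' b : G) : sgn (a + a') b = sgn a b * sgn a' b :> C.
Proof. by rewrite /sgn mulmxDl mxE F2_sgnD. Qed.

Lemma sgnDr (a b b' : G) : sgn a (b + b') = sgn a b * sgn a b' :> C.
Proof. by rewrite sgn_sym sgnDl !(sgn_sym b) (sgn_sym b'). Qed.

Lemma sgn0l (b : G) : sgn 0 b = 1 :> C.
Proof. by rewrite /sgn mul0mx mxE expr0. Qed.

Lemma sgn0r (b : G) : sgn b 0 = 1 :> C.
Proof. by rewrite sgn_sym sgn0l. Qed.

Lemma sgn_pm (a b : G) : sgn a b = 1 :> C \/ sgn a b = -1 :> C.
Proof.
rewrite /sgn -signr_odd; case: (odd _); [right|left]; by rewrite ?expr1 ?expr0.
Qed.

Lemma sgn_sq (a b : G) : sgn a b * sgn a b = 1 :> C.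
Proof. by case: (sgn_pm a b) => ->; rewrite ?mulrNN mulr1. Qed.

Lemma sgn_real (a b : G) : sgn a b \is @Num.real C.
Proof. by case: (sgn_pm a b) => ->; rewrite ?rpredN rpred1. Qed.

Lemma sgn_conj (a b : G) : (sgn a b)^* = sgn a b :> C.
Proof. exact/conj_Creal/sgn_real. Qed.

Lemma sgn_orth (b : G) :
  \sum_(w : G) sgn w b = (if b == 0 then #|[set: G]|%:R else 0) :> C.
Proof.
case: eqP => [->|/eqP Hb].
  by rewrite cardsT -sumr_const; apply: eq_bigr => w _; rewrite sgn0r.
have [i Hi] : exists i, b 0 i != 0.
  apply/existsP; move: Hb; apply: contraR => /existsPn H.
  apply/eqP/matrixP => r c; rewrite ord1 mxE; apply/eqP.
  by move: (H c); rewrite negbK.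
set e : G := delta_mx 0 i.
have He : sgn e b = -1 :> C.
  by rewrite /sgn /e -rowE !mxE F2_neq0 // expr1.
set S := \sum_w _.
have HS : S = - S.
  rewrite {1}/S (reindex_inj (addIr e)) /=.
  by rewrite -mulN1r mulr_sumr; apply: eq_bigr => w _; rewrite sgnDl He mulrC.
have : S *+ 2 == 0 by rewrite mulr2n {1}HS addNr.
by rewrite mulrn_eq0 /= => /eqP.
Qed.

End Sgn.



Section ExpL.
Variable C : numClosedFieldType.

Lemma Exp_le (T : finType) (S : {set T}) (f g : T -> C) :
  (forall x, x \in S -> f x <= g x) -> Exp S f <= Exp S g.
Proof.
move=> H; rewrite /Exp; apply: ler_wpM2l; first by rewrite invr_ge0 ler0n.
exact: ler_sum.
Qed.

Lemma Exp_const (T : finType) (S : {set T}) (k : C) :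
  S != set0 -> Exp S (fun _ => k) = k.
Proof.
move=> HS; rewrite /Exp sumr_const -(mulr_natr k) mulrC mulfK //.
by rewrite pnatr_eq0 -lt0n card_gt0.
Qed.

Lemma Exp_add (T : finType) (S : {set T}) (f g : T -> C) :
  Exp S (fun x => f x + g x) = Exp S f + Exp S g.
Proof. by rewrite /Exp big_split mulrDr. Qed.

Lemma Exp_scale (T : finType) (S : {set T}) (k : C) (f : T -> C) :
  Exp S (fun x => k * f x) = k * Exp S f.
Proof. by rewrite /Exp -mulr_sumr mulrCA. Qed.

Lemma Exp_opp (T : finType) (S : {set T}) (f : T -> C) :
  Exp S (fun x => - f x) = - Exp S f.
Proof. by rewrite /Exp sumrN mulrN. Qed.

Lemma Exp_ext (T : finType) (S : {set T}) (f g : T -> C) :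
  (forall x, x \in S -> f x = g x) -> Exp S f = Exp S g.
Proof. by move=> H; rewrite /Exp (eq_bigr _ H). Qed.

Lemma Exp_swap (T U : finType) (A : {set T}) (B : {set U}) (f : T -> U -> C) :
  Exp A (fun a => Exp B (fun b => f a b)) = Exp B (fun b => Exp A (fun a => f a b)).
Proof.
rewrite /Exp.
transitivity (\sum_(a in A) \sum_(b in B) (#|A|%:R^-1 * #|B|%:R^-1 * f a b)).
  rewrite mulr_sumr; apply: eq_bigr => a _; rewrite mulrA mulr_sumr.
  by apply: eq_bigr => b _.
rewrite exchange_big /= mulr_sumr; apply: eq_bigr => b _; rewrite mulrA mulr_sumr.
by apply: eq_bigr => a _; rewrite (mulrC #|A|%:R^-1).
Qed.

Lemma Exp_real (T : finType) (S : {set T}) (f : T -> C) :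
  (forall x, f x \is Num.real) -> Exp S f \is Num.real.
Proof.
move=> H; rewrite /Exp; apply: realM; first by rewrite rpredV realn.
by apply: rpred_sum => x _.
Qed.

Variable n : nat.
Local Notation G := 'rV['F_2]_n.

Lemma G_eqD (b b' : G) : (b + b' == 0) = (b == b').
Proof.
rewrite addr_eq0; congr (_ == _).
by rewrite -[LHS]add0r -(G_addxx b') addrK.
Qed.

Lemma fourier_inv (F : G -> C) (b' : G) :
  F b' = \sum_w Exp [set: G] (fun b => sgn w b * F b) * sgn w b'.
Proof.
rewrite /Exp.
have HN : (#|[set: G]|%:R : C) != 0.
  by rewrite pnatr_eq0 -lt0n card_gt0; apply/set0Pn; exists 0; rewrite inE.
set N := (#|[set: G]|%:R : C).
have -> : \sum_w (N^-1 * (\sum_(b in [set: G]) sgn w b * F b)) * sgn w b' =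
          N^-1 * \sum_(b in [set: G]) \sum_w F b * sgn w (b + b').
  rewrite exchange_big mulr_sumr; apply: eq_bigr => w _.
  rewrite -mulrA mulr_suml; congr (_ * _); apply: eq_bigr => b _.
  by rewrite sgnDr; ring.
under eq_bigr do rewrite -mulr_sumr sgn_orth G_eqD.
rewrite (bigD1 b') ?inE //= eqxx big1 ?addr0; last by move=> b /andP [_ /negPf ->]; rewrite mulr0.
by rewrite mulrC mulfK.
Qed.

Lemma fourier (lam : C) (S : {set G}) (F : G -> C) :
  S != set0 -> lambda_biased lam S ->
  (forall w, 0 <= Exp [set: G] (fun b => sgn w b * F b)) ->
  (1 - lam) * (F 0 - Exp [set: G] F) <= F 0 - Exp S F.
Proof.
move=> HS Hlam Hq.
pose q := fun w => Exp [set: G] (fun b => sgn w b * F b).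
pose beta := fun w => Exp S (fun b' => (sgn b' w : C)).
have HF0 : F 0 = \sum_w q w.
  by rewrite (fourier_inv F 0); apply: eq_bigr => w _; rewrite sgn0r mulr1.
have HE : Exp [set: G] F = q 0.
  by rewrite /q; apply: Exp_ext => b _; rewrite sgn0l mul1r.
have HES : Exp S F = \sum_w q w * beta w.
  rewrite (Exp_ext (g := fun b' => \sum_w q w * sgn w b')); last first.
    by move=> b' _; exact: fourier_inv.
  rewrite /Exp exchange_big /= mulr_sumr; apply: eq_bigr => w _.
  rewrite /beta /Exp -mulr_sumr mulrCA; congr (_ * (_ * _)); apply: eq_bigr => b' _.
  by rewrite sgn_sym.
have Hb0 : beta 0 = 1.
  by rewrite /beta (Exp_ext (g := fun _ => 1)) ?Exp_const // => b' _; rewrite sgn0r.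
have L : \sum_w q w - q 0 = \sum_(w | w != 0) q w.
  by rewrite (bigD1 0) //= addrAC subrr add0r.
have R : \sum_w q w - \sum_w q w * beta w = \sum_(w | w != 0) q w * (1 - beta w).
  rewrite -sumrB (bigD1 0) //= Hb0 mulr1 subrr add0r.
  by apply: eq_bigr => w _; rewrite mulrBr mulr1.
rewrite HES HF0 HE L R.
rewrite mulr_sumr; apply: ler_sum => w Hw.
rewrite mulrC; apply: ler_wpM2l; first exact: Hq.
apply: lerB => //.
apply: real_ler_normlW; first by apply: Exp_real => b'; exact: sgn_real.
exact: Hlam.
Qed.

End ExpL.



Section Mx.
Variable C : numClosedFieldType.
Variable d : nat.
Local Notation M := 'M[C]_d.

Lemma bo_adj (U : M) : binary_observable U -> adj U = U.
Proof. by case. Qed.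

Lemma bo_sq (U : M) : binary_observable U -> U *m U = 1%:M.
Proof. by case=> h [u _]; rewrite -{1}h. Qed.

Lemma nrm2_expand (sigma U V : M) (s : C) :
  binary_observable U -> binary_observable V -> s^* = s -> s * s = 1 ->
  nrm2 sigma (U *m V - s *: (V *m U)) =
  2%:R * \tr sigma - s * (\tr (V *m U *m V *m U *m sigma) + \tr (U *m V *m U *m V *m sigma)).
Proof.
move=> hU hV hs hss.
have UU := bo_sq hU; have VV := bo_sq hV.
rewrite /nrm2 hadjB hadjZ !hadjM (bo_adj hU) (bo_adj hV) hs.
rewrite mulmxBl !mulmxBr -!scalemxAl -!scalemxAr !scalerA hss scale1r.
have E1 : V *m U *m (U *m V) = 1%:M by rewrite -mulmxA (mulmxA U) UU mul1mx VV.
have E2 : U *m V *m (V *m U) = 1%:M by rewrite -mulmxA (mulmxA V) VV mul1mx UU.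
rewrite E1 E2.
rewrite (mulmxBl (1%:M - _)) (mulmxBl 1%:M) (mulmxBl (s *: _)) -!scalemxAl !mul1mx.
rewrite !linearB /= !linearZ /= !mulmxA.
ring.
Qed.

End Mx.



Section Twirl.
Variable C : numClosedFieldType.
Variables n d : nat.
Local Notation G := 'rV['F_2]_n.
Local Notation M := 'M[C]_d.
Variable P : G -> M.
Hypothesis hP : forall a, binary_observable (P a).
Hypothesis hPm : forall a b, P a *m P b = P (a + b).
Variable rho : M.
Hypothesis hrho : forall v : 'cV[C]_d, 0 <= (adj v *m rho *m v) 0 0.

Lemma NG_neq0 : (#|[set: G]|%:R : C) != 0.
Proof. by rewrite pnatr_eq0 -lt0n card_gt0; apply/set0Pn; exists 0; rewrite inE. Qed.

Lemma twirl_psd (v : 'cV[C]_d) : 0 <= (adj v *m twirl P rho *m v) 0 0.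
Proof.
rewrite /twirl -scalemxAr -scalemxAl mulmx_sumr mulmx_suml mxE summxE.
apply: mulr_ge0; first by rewrite invr_ge0 ler0n.
apply: sumr_ge0 => a _.
have -> : adj v *m (P a *m rho *m P a) *m v = adj (P a *m v) *m rho *m (P a *m v).
  by rewrite hadjM (bo_adj (hP a)) !mulmxA.
exact: hrho.
Qed.

Lemma twirl_tr : \tr (twirl P rho) = \tr rho.
Proof.
rewrite /twirl linearZ linear_sum /=.
under eq_bigr => a _ do rewrite mxtrace_mulC mulmxA (bo_sq (hP a)) mul1mx.
rewrite sumr_const -cardsT -(mulr_natr (\tr rho)) mulrC mulfK //; exact: NG_neq0.
Qed.

Variable B : M.
Hypothesis hB : binary_observable B.

Let Q (b : G) := P b *m B *m P b.
Let sigma := twirl P rho.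
Let N := (#|[set: G]|%:R : C).

Lemma twirl_trE (X : M) :
  \tr (X *m sigma) = N^-1 * \sum_c \tr (X *m (P c *m rho *m P c)).
Proof. by rewrite /sigma /twirl -scalemxAr mulmx_sumr linearZ linear_sum. Qed.

Lemma T1_term (b c : G) :
  \tr (P b *m B *m P b *m B *m (P c *m rho *m P c)) = \tr (Q (b + c) *m Q c *m rho).
Proof.
have Hb : P b = P (b + c) *m P c by rewrite hPm -addrA G_addxx addr0.
have Hc : P c *m P b = P (b + c) by rewrite hPm addrC.
by rewrite !mulmxA mxtrace_mulC !mulmxA Hc Hb /Q !mulmxA.
Qed.

Lemma T2_term (b c : G) :
  \tr (B *m P b *m B *m P b *m (P c *m rho *m P c)) = \tr (Q c *m Q (b + c) *m rho).
Proof.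
have Hb : P b = P c *m P (b + c) by rewrite hPm addrCA G_addxx addr0.
rewrite !mulmxA mxtrace_mulC !mulmxA -[_ *m P b *m P c]mulmxA hPm.
by rewrite Hb /Q !mulmxA.
Qed.


Variable u : G.
Let Mu := \sum_b sgn u b *: Q b.

Lemma trMM : \tr (Mu *m Mu *m rho) =
  \sum_x \sum_y sgn u x * sgn u y * \tr (Q x *m Q y *m rho).
Proof.
rewrite /Mu mulmx_suml mulmx_suml linear_sum /=; apply: eq_bigr => x _.
rewrite -!scalemxAl linearZ /= mulmx_sumr mulmx_suml linear_sum mulr_sumr.
apply: eq_bigr => y _.
by rewrite -scalemxAr -scalemxAl linearZ /= mulrA.
Qed.

Lemma Mu_herm : adj Mu = Mu.
Proof.
rewrite /Mu hadj_sum; apply: eq_bigr => b _.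
by rewrite hadjZ sgn_conj /Q !hadjM !(bo_adj (hP b)) (bo_adj hB) !mulmxA.
Qed.

Lemma key_pos : 0 <= \sum_b sgn u b *
   (\tr (P b *m B *m P b *m B *m sigma) + \tr (B *m P b *m B *m P b *m sigma)).
Proof.
have S1 : \sum_b sgn u b * \tr (P b *m B *m P b *m B *m sigma) =
          N^-1 * \tr (Mu *m Mu *m rho).
  under eq_bigr do rewrite twirl_trE.
  under eq_bigr do under eq_bigr do rewrite T1_term.
  transitivity (N^-1 * \sum_c \sum_b sgn u b * \tr (Q (b + c) *m Q c *m rho)).
    rewrite exchange_big mulr_sumr; apply: eq_bigr => b _.
    by rewrite mulrCA mulr_sumr.
  congr (_ * _); rewrite trMM [RHS]exchange_big /=; apply: eq_bigr => c _.
  rewrite (reindex_inj (addIr c)) /=; apply: eq_bigr => b _.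
  by rewrite -addrA G_addxx addr0 sgnDr.
have S2 : \sum_b sgn u b * \tr (B *m P b *m B *m P b *m sigma) =
          N^-1 * \tr (Mu *m Mu *m rho).
  under eq_bigr do rewrite twirl_trE.
  under eq_bigr do under eq_bigr do rewrite T2_term.
  transitivity (N^-1 * \sum_c \sum_b sgn u b * \tr (Q c *m Q (b + c) *m rho)).
    rewrite exchange_big mulr_sumr; apply: eq_bigr => b _.
    by rewrite mulrCA mulr_sumr.
  congr (_ * _); rewrite trMM; apply: eq_bigr => c _.
  rewrite (reindex_inj (addIr c)) /=; apply: eq_bigr => b _.
  by rewrite -addrA G_addxx addr0 sgnDr (mulrC (sgn u b)).
under eq_bigr do rewrite mulrDr.
rewrite big_split /= S1 S2.
have H : 0 <= \tr (Mu *m Mu *m rho) by rewrite -{1}Mu_herm; exact: psd_tr.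
by apply: addr_ge0; apply: mulr_ge0 => //; rewrite invr_ge0 ler0n.
Qed.

End Twirl.



Section Row.
Variable C : numClosedFieldType.
Variables n d : nat.
Local Notation G := 'rV['F_2]_n.
Local Notation M := 'M[C]_d.

Lemma sumT (T : finType) (f : T -> C) : \sum_(b in [set: T]) f b = \sum_b f b.
Proof. by apply: eq_bigl => b; rewrite inE. Qed.

Lemma setT_neq0 : [set: G] != set0.
Proof. by apply/set0Pn; exists 0; rewrite inE. Qed.

Lemma Exp_subc (T : finType) (S : {set T}) (k : C) (f : T -> C) :
  S != set0 -> Exp S (fun x => k - f x) = k - Exp S f.
Proof. by move=> HS; rewrite Exp_add Exp_const // Exp_opp. Qed.

Lemma nrm2_0 (sigma : M) : nrm2 sigma 0 = 0.
Proof. by rewrite /nrm2 mulmx0 mul0mx mxtrace0. Qed.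

Lemma row_bound (P : G -> M) (hP : forall a, binary_observable (P a))
  (hPm : forall a b, P a *m P b = P (a + b)) (rho : M)
  (hrho : forall v : 'cV[C]_d, 0 <= (adj v *m rho *m v) 0 0)
  (htr : \tr rho = 1) (B : M) (hB : binary_observable B)
  (lam : C) (S : {set G}) (a : G) :
  S != set0 -> lambda_biased lam S ->
  (1 - lam) * Exp [set: G] (fun b => nrm2 (twirl P rho) (B *m P b - sgn a b *: (P b *m B)))
  <= Exp S (fun b => nrm2 (twirl P rho) (B *m P b - sgn a b *: (P b *m B))).
Proof.
move=> HS Hlam.
set sigma := twirl P rho.
pose F := fun b => sgn a b * (\tr (P b *m B *m P b *m B *m sigma)
                              + \tr (B *m P b *m B *m P b *m sigma)).
have hF : forall b, nrm2 sigma (B *m P b - sgn a b *: (P b *m B)) = 2%:R - F b.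
  move=> b; rewrite (nrm2_expand _ hB (hP b) (@sgn_conj C _ a b) (@sgn_sq C _ a b)).
  by rewrite /sigma twirl_tr // htr mulr1.
have P0 : P 0 = 1%:M by rewrite -(bo_sq (hP 0)) hPm addr0.
have F0 : F 0 = 2%:R.
  move/eqP: (hF 0); rewrite P0 sgn0r scale1r mulmx1 mul1mx subrr nrm2_0.
  by rewrite eq_sym subr_eq0 => /eqP.
rewrite (Exp_ext (g := fun b => F 0 - F b)); last by move=> b _; rewrite hF F0.
rewrite (Exp_ext (S := S) (g := fun b => F 0 - F b)); last by move=> b _; rewrite hF F0.
rewrite !Exp_subc //; last exact: setT_neq0.
apply: fourier => // w.
rewrite /Exp; apply: mulr_ge0; first by rewrite invr_ge0 ler0n.
rewrite sumT /F; under eq_bigr do rewrite mulrA -sgnDl.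
exact: (key_pos hP hPm hrho hB (w + a)).
Qed.

End Row.



Section Final.
Variable C : numClosedFieldType.

Lemma step (T : finType) (S : {set T}) (lam delta : C) (g gs : T -> C) :
  S != set0 -> [set: T] != set0 -> lam < 1 ->
  (1 - lam) * Exp [set: T] gs <= Exp S gs ->
  (forall x, `|g x - gs x| <= delta) ->
  (forall x, 0 <= g x) -> (forall x, 0 <= gs x) ->
  Exp [set: T] g <= (1 - lam)^-1 * Exp S g + ((1 - lam)^-1 * delta + delta).
Proof.
move=> HS HT Hl H Hd Hg Hgs.
have Hreal : forall x, g x - gs x \is Num.real.
  by move=> x; apply: rpredB; apply: ger0_real.
have L1 : forall x, g x <= gs x + delta.
  move=> x; rewrite -lerBlDl; apply: real_ler_normlW => //; exact: Hd.
have L2 : forall x, gs x <= g x + delta.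
  move=> x; rewrite -lerBlDl; apply: real_ler_normlW.
    by rewrite -opprB rpredN.
  by rewrite -opprB normrN.
have Hc : 0 < 1 - lam by rewrite subr_gt0.
have E1 : Exp [set: T] g <= Exp [set: T] gs + delta.
  by rewrite -(Exp_const delta HT) -Exp_add; apply: Exp_le => x _; exact: L1.
have E2 : Exp S gs <= Exp S g + delta.
  by rewrite -(Exp_const delta HS) -Exp_add; apply: Exp_le => x _; exact: L2.
have E3 : Exp [set: T] gs <= (1 - lam)^-1 * Exp S gs.
  by rewrite ler_pdivlMl.
apply: (le_trans E1); rewrite addrA lerD2r -mulrDr.
apply: (le_trans E3); apply: ler_wpM2l => //.
by rewrite invr_ge0 ltW.
Qed.

Lemma final_ineq (lam delta Y : C) : 0 <= lam -> lam < 1 -> 0 <= delta ->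
  (1 - lam)^-1 * ((1 - lam)^-1 * Y + ((1 - lam)^-1 * delta + delta))
    + ((1 - lam)^-1 * delta + delta)
  <= ((1 - lam) ^+ 2)^-1 * Y + 2%:R * delta * (2%:R - lam) / (1 - lam) ^+ 2.
Proof.
move=> hl0 hl1 hd.
have hc : 1 - lam != 0 by rewrite subr_eq0 eq_sym (lt_eqF hl1).
rewrite -subr_ge0.
have -> : ((1 - lam) ^+ 2)^-1 * Y + 2%:R * delta * (2%:R - lam) / (1 - lam) ^+ 2 -
  ((1 - lam)^-1 * ((1 - lam)^-1 * Y + ((1 - lam)^-1 * delta + delta))
    + ((1 - lam)^-1 * delta + delta)) = delta * lam * (2%:R - lam) / (1 - lam) ^+ 2.
  by field.
apply: mulr_ge0; last by rewrite invr_ge0 exprn_ge0 // subr_ge0 ltW.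
apply: mulr_ge0; first exact: mulr_ge0.
rewrite subr_ge0; apply: (le_trans (ltW hl1)); by rewrite ler1n.
Qed.

Lemma nrm2_swap d (sigma U V : 'M[C]_d) (s : C) :
  binary_observable U -> binary_observable V -> s^* = s -> s * s = 1 ->
  nrm2 sigma (U *m V - s *: (V *m U)) = nrm2 sigma (V *m U - s *: (U *m V)).
Proof.
move=> hU hV hs hss; rewrite (nrm2_expand _ hU hV hs hss) (nrm2_expand _ hV hU hs hss).
by rewrite (addrC (\tr (V *m U *m V *m U *m sigma))).
Qed.

End Final.

Unset Implicit Arguments. Set Strict Implicit.


Theorem corollary3p5 (C : numClosedFieldType) (n d : nat)
  (Eff : 'M[C]_d -> Prop) (lam delta : C)
  (X Z : 'rV['F_2]_n -> 'M[C]_d) (rho : 'M[C]_d) (S : {set 'rV['F_2]_n}) :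
  eff_class Eff ->
  0 <= lam -> lam < 1 -> 0 <= delta ->
  (forall a, binary_observable (X a) /\ Eff (X a)) ->
  (forall a, binary_observable (Z a) /\ Eff (Z a)) ->
  (forall a b, X a *m X b = X (a + b)) ->
  (forall a b, Z a *m Z b = Z (a + b)) ->
  state rho ->
  capprox Eff delta rho (twirl X rho) ->
  capprox Eff delta rho (twirl Z rho) ->
  S != set0 ->
  lambda_biased lam S ->
  Exp [set: 'rV['F_2]_n] (fun a => Exp [set: 'rV['F_2]_n] (fun b =>
      nrm2 rho (Z a *m X b - sgn a b *: (X b *m Z a))))
  <= ((1 - lam) ^+ 2)^-1 *
     Exp S (fun a => Exp S (fun b => nrm2 rho (Z a *m X b - sgn a b *: (X b *m Z a))))
   + 2%:R * delta * (2%:R - lam) / (1 - lam) ^+ 2.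
Proof.
move=> hEff hl0 hl1 hd0 hX hZ hXm hZm [[_ hrho] htr] [capX _] [capZ _] HS Hbias.
have hXo : forall a, binary_observable (X a) by move=> a; case: (hX a).
have hZo : forall a, binary_observable (Z a) by move=> a; case: (hZ a).
have HT : [set: 'rV['F_2]_n] != set0 by apply/set0Pn; exists 0; rewrite inE.
have Heff : forall a b, Eff (Z a *m X b) /\ Eff (sgn a b *: (X b *m Z a)).
  move=> a b; split; first by apply: (eff_mul hEff); [case: (hZ a) | case: (hX b)].
  have Hm : Eff (X b *m Z a) by apply: (eff_mul hEff); [case: (hX b) | case: (hZ a)].
  case: (@sgn_pm C n a b) => ->; first by rewrite scale1r.
  have -> : -1 *: (X b *m Z a) = (- 1%:M) *m (X b *m Z a) by rewrite scaleN1r mulNmx mul1mx.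
  by apply: (eff_mul hEff) => //; exact: (eff_neg hEff).
have ge0 : forall (sg A : 'M[C]_d), (forall v : 'cV[C]_d, 0 <= (adj v *m sg *m v) 0 0) ->
    0 <= nrm2 sg A.
  by move=> sg A H; exact: psd_tr.
pose f := fun a b => nrm2 rho (Z a *m X b - sgn a b *: (X b *m Z a)).
set c := (1 - lam)^-1.
set K := c * delta + delta.
have stepX : forall a, Exp [set: 'rV['F_2]_n] (fun b => f a b)
                        <= c * Exp S (fun b => f a b) + K.
  move=> a.
  apply: (step (gs := fun b => nrm2 (twirl X rho) (Z a *m X b - sgn a b *: (X b *m Z a)))) => //.
  - exact: (row_bound hXo hXm hrho htr (hZo a) a HS Hbias).
  - by move=> b; case: (Heff a b) => h1 h2; exact: capX.
  - by move=> b; apply: ge0.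
  - by move=> b; apply: ge0; exact: twirl_psd.
have stepZ : forall b, Exp [set: 'rV['F_2]_n] (fun a => f a b)
                        <= c * Exp S (fun a => f a b) + K.
  move=> b.
  apply: (step (gs := fun a => nrm2 (twirl Z rho) (Z a *m X b - sgn a b *: (X b *m Z a)))) => //.
  - have R := row_bound hZo hZm hrho htr (hXo b) b HS Hbias.
    have E : forall a, nrm2 (twirl Z rho) (X b *m Z a - sgn b a *: (Z a *m X b)) =
                      nrm2 (twirl Z rho) (Z a *m X b - sgn a b *: (X b *m Z a)).
      move=> a; rewrite (@sgn_sym C n b a).
      exact: nrm2_swap (hXo b) (hZo a) (@sgn_conj C n a b) (@sgn_sq C n a b).
    by rewrite -!(Exp_ext (fun x _ => E x)).
  - by move=> a; case: (Heff a b) => h1 h2; exact: capZ.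
  - by move=> a; apply: ge0.
  - by move=> a; apply: ge0; exact: twirl_psd.
apply: (@le_trans _ _ (Exp [set: 'rV['F_2]_n] (fun a => c * Exp S (fun b => f a b) + K))).
  by apply: Exp_le => a _; exact: stepX.
rewrite Exp_add Exp_const // Exp_scale Exp_swap.
apply: (@le_trans _ _ (c * Exp S (fun b => c * Exp S (fun a => f a b) + K) + K)).
  rewrite lerD2r; apply: ler_wpM2l.
    by rewrite invr_ge0 subr_ge0 ltW.
  by apply: Exp_le => b _; exact: stepZ.
rewrite Exp_add Exp_const // Exp_scale Exp_swap.
exact: final_ineq.
Qed.
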